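(* Let $p$ be an odd prime and let $R$ be a nearring with identity whose additive group is $G_1=\langle a\rangle+\langle b\rangle+\langle c\rangle$ with $ap=bp=cp=0$, $a+b=b+a+c$, $a+c=c+a$, $b+c=c+b$, and suppose $a$ is the identity element of $R$. Write every element as $x=ax_1+bx_2+cx_3$ ($0\le x_i<p$), and define maps $\alpha,\beta,\gamma\colon R\to\mathbb Z_p$ by $xb=a\alpha(x)+b\beta(x)+c\gamma(x)$. Then for $x=ax_1+bx_2+cx_3$, $y=ay_1+by_2+cy_3\in R$, $$xy=a(x_1y_1+\alpha(x)y_2)+b(x_2y_1+\beta(x)y_2)+c\Big(-x_1x_2\tbinom{y_1}{2}-\alpha(x)\beta(x)\tbinom{y_2}{2}-x_2\alpha(x)y_1y_2+x_3y_1+\gamma(x)y_2+x_1\beta(x)y_3-x_2\alpha(x)y_3\Big).$$ Moreover: (0) $\alpha(0)\equiv\beta(0)\equiv\gamma(0)\equiv 0\pmod p$ if and only if $R$ is zero-symmetric; (1) $\alpha(xy)\equiv x_1\alpha(y)+\alpha(x)\beta(y)\pmod p$; (2) $\beta(xy)\equiv x_2\alpha(y)+\beta(x)\beta(y)\pmod p$; (3) $\gamma(xy)\equiv -x_1x_2\binom{\alpha(y)}{2}-\alpha(x)\beta(x)\binom{\beta(y)}{2}-x_2\alpha(x)\alpha(y)\beta(y)+x_3\alpha(y)+\gamma(x)\beta(y)+x_1\beta(x)\gamma(y)-x_2\alpha(x)\gamma(y)\pmod p$.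
   Context: A (left) nearring is a set $R$ with operations $+,\cdot$ such that $(R,+)$ is a group with neutral element $0$, $(R,\cdot)$ is a semigroup, and $x(y+z)=xy+xz$ for all $x,y,z$; it has an identity if $(R,\cdot)$ is a monoid. It is zero-symmetric if $0\cdot x=0$ for all $x\in R$. The group is written additively; $gk$ denotes $g$ added to itself $k$ times. Coefficients are read modulo $p$. *)

(* Defs.v *)
From mathcomp Require Import all_boot all_order all_algebra.
Set Implicit Arguments. Unset Strict Implicit. Unset Printing Implicit Defensive.
Import GRing.Theory Num.Theory.

Record nearring := NearRing {
  nr_car :> Type;
  nr_add : nr_car -> nr_car -> nr_car;
  nr_zero : nr_car;
  nr_opp : nr_car -> nr_car;
  nr_mul : nr_car -> nr_car -> nr_car;
  nr_addA : forall x y z, nr_add x (nr_add y z) = nr_add (nr_add x y) z;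
  nr_add0r : forall x, nr_add nr_zero x = x;
  nr_addr0 : forall x, nr_add x nr_zero = x;
  nr_addNr : forall x, nr_add (nr_opp x) x = nr_zero;
  nr_addrN : forall x, nr_add x (nr_opp x) = nr_zero;
  nr_mulA : forall x y z, nr_mul x (nr_mul y z) = nr_mul (nr_mul x y) z;
  nr_mulDr : forall x y z, nr_mul x (nr_add y z) = nr_add (nr_mul x y) (nr_mul x z)
}.

Section Mult.
Variable R : nearring.

Fixpoint nmul (g : R) (k : nat) : R :=
  match k with O => nr_zero R | S k' => nr_add (nmul g k') g end.

Definition zmul (g : R) (k : int) : R :=
  match k with Posz n => nmul g n | Negz n => nr_opp (nmul g n.+1) end.

Definition comb3 (a b c : R) (k1 k2 k3 : int) : R :=
  nr_add (nr_add (zmul a k1) (zmul b k2)) (zmul c k3).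

Definition zero_symmetric : Prop := forall x : R, nr_mul (nr_zero R) x = nr_zero R.
End Mult.

(* Main.v *)
Require Import Defs.
From mathcomp Require Import all_boot all_order all_algebra.
From mathcomp Require Import ring.
Import GRing.Theory Num.Theory.
Local Open Scope ring_scope.

Section G.
Variable R : nearring.
Local Infix "⊕" := (@nr_add R) (at level 50, left associativity).
Local Infix "⊗" := (@nr_mul R) (at level 40, left associativity).
Local Notation "0g" := (@nr_zero R).
Local Notation opp := (@nr_opp R).

Lemma gA (x y z : R) : x ⊕ (y ⊕ z) = x ⊕ y ⊕ z. Proof. exact: nr_addA. Qed.
Lemma g0l (x : R) : 0g ⊕ x = x. Proof. exact: nr_add0r. Qed.
Lemma g0r (x : R) : x ⊕ 0g = x. Proof. exact: nr_addr0. Qed.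
Lemma gKl (x y : R) : opp x ⊕ (x ⊕ y) = y.
Proof. by rewrite gA nr_addNr g0l. Qed.
Lemma gKr (x y : R) : x ⊕ y ⊕ opp y = x.
Proof. by rewrite -gA nr_addrN g0r. Qed.
Lemma oppU (x y : R) : x ⊕ y = 0g -> y = opp x.
Proof. by move=> h; rewrite -(gKl x y) h g0r. Qed.
Lemma gcanl (x y z : R) : x ⊕ y = x ⊕ z -> y = z.
Proof. by move=> h; rewrite -(gKl x y) h gKl. Qed.

Lemma mulg0 (x : R) : x ⊗ 0g = 0g.
Proof.
apply: (@gcanl (x ⊗ 0g)); rewrite -nr_mulDr g0r g0r //.
Qed.
Lemma mul_opp (x y : R) : x ⊗ opp y = opp (x ⊗ y).
Proof. apply: oppU; by rewrite -nr_mulDr nr_addrN mulg0. Qed.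
Lemma mul_nmul (x g : R) n : x ⊗ nmul g n = nmul (x ⊗ g) n.
Proof. elim: n => [|n IH] /=; first exact: mulg0. by rewrite nr_mulDr IH. Qed.
Lemma mul_zmul (x g : R) k : x ⊗ zmul g k = zmul (x ⊗ g) k.
Proof. case: k => n; rewrite /zmul ?mul_opp mul_nmul //. Qed.

Lemma nmulD (g : R) m n : nmul g (m + n)%N = nmul g m ⊕ nmul g n.
Proof.
elim: n => [|n IH]; first by rewrite addn0 /= g0r.
by rewrite addnS /= IH gA.
Qed.

Lemma nmul_comm (g h : R) n : g ⊕ h = h ⊕ g -> nmul g n ⊕ h = h ⊕ nmul g n.
Proof.
move=> e; elim: n => [|n IH] /=; first by rewrite g0l g0r.
by rewrite -gA e gA IH -gA.
Qed.
Lemma opp_comm (g h : R) : g ⊕ h = h ⊕ g -> opp g ⊕ h = h ⊕ opp g.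
Proof.
move=> e.
have -> : opp g ⊕ h = opp g ⊕ (h ⊕ g) ⊕ opp g by rewrite gA gKr.
by rewrite -e gKl.
Qed.
Lemma zmul_comm (g h : R) k : g ⊕ h = h ⊕ g -> zmul g k ⊕ h = h ⊕ zmul g k.
Proof. move=> e; case: k => n; rewrite /zmul; [exact: nmul_comm | apply: opp_comm; exact: nmul_comm]. Qed.

Variable p : nat.
Hypothesis p_gt0 : (0 < p)%N.
Variable g : R.
Hypothesis hg : nmul g p = 0g.

Lemma nmul_dvd m : (p %| m)%N -> nmul g m = 0g.
Proof.
move/divnK=> <-; elim: (m %/ p)%N => [|q IH]; first by rewrite mul0n.
by rewrite mulSn nmulD hg IH g0l.
Qed.
Lemma nmul_mod m : nmul g m = nmul g (m %% p)%N.
Proof. by rewrite {1}(divn_eq m p) nmulD nmul_dvd ?dvdn_mull // g0l. Qed.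
Lemma nmul_eqz (m n : nat) : ((m%:Z) = n %[mod p])%Z -> nmul g m = nmul g n.
Proof.
rewrite !modz_nat => -[e]; by rewrite nmul_mod e -nmul_mod.
Qed.

Lemma pz0 : (p%:Z != 0). Proof. by rewrite eqz_nat -lt0n. Qed.

Lemma zmul_nmul k : zmul g k = nmul g `|(k %% p)%Z|%N.
Proof.
case: k => n; rewrite /zmul; first by rewrite modz_nat absz_nat -nmul_mod.
symmetry; apply: oppU; rewrite -nmulD.
rewrite (@nmul_eqz _ 0%N) //.
rewrite PoszD gez0_abs ?modz_ge0 ?pz0 // modzDmr.
by rewrite -[Posz n.+1]opprK -NegzE addNr.
Qed.

Lemma zmul_eq k l : (k = l %[mod p])%Z -> zmul g k = zmul g l.
Proof. by rewrite !zmul_nmul => ->. Qed.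

Lemma zmulD k l : zmul g (k + l) = zmul g k ⊕ zmul g l.
Proof.
rewrite !zmul_nmul -nmulD; apply: nmul_eqz.
by rewrite PoszD !gez0_abs ?modz_ge0 ?pz0 // modz_mod modzDml modzDmr.
Qed.

Lemma zmulN k : zmul g (- k) = opp (zmul g k).
Proof. by apply: oppU; rewrite -zmulD addrN. Qed.

Lemma zmulC k l : zmul g k ⊕ zmul g l = zmul g l ⊕ zmul g k.
Proof. by rewrite -!zmulD addrC. Qed.
End G.

Section ABC.
Variable R : nearring.
Local Infix "⊕" := (@nr_add R) (at level 50, left associativity).
Local Infix "⊗" := (@nr_mul R) (at level 40, left associativity).
Local Notation "0g" := (@nr_zero R).
Local Notation opp := (@nr_opp R).

Arguments gA {R} x y z.
Lemma swap (x y z : R) : y ⊕ z = z ⊕ y -> x ⊕ y ⊕ z = x ⊕ z ⊕ y.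
Proof. by move=> e; rewrite -!gA e. Qed.
Arguments swap {x y z}.

Variables (p : nat) (a b c : R).
Hypothesis p_gt0 : (0 < p)%N.
Hypotheses (ha : nmul a p = 0g) (hb : nmul b p = 0g) (hc : nmul c p = 0g).
Hypothesis hab : a ⊕ b = b ⊕ a ⊕ c.
Hypothesis hac : a ⊕ c = c ⊕ a.
Hypothesis hbc : b ⊕ c = c ⊕ b.

Lemma cma m : nmul c m ⊕ a = a ⊕ nmul c m.
Proof. by apply: nmul_comm. Qed.
Lemma cmb m : nmul c m ⊕ b = b ⊕ nmul c m.
Proof. by apply: nmul_comm. Qed.
Lemma cmc m n : nmul c m ⊕ nmul c n = nmul c n ⊕ nmul c m.
Proof. by apply: nmul_comm; symmetry; apply: nmul_comm. Qed.

Lemma L1 m : nmul b m ⊕ a ⊕ nmul c m = a ⊕ nmul b m.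
Proof.
elim: m => [|m IH]; first by rewrite /= g0l !g0r.
rewrite [nmul b _]/= [nmul c _]/= gA (swap (esym (cma m))) (swap (esym (cmb m))).
rewrite -(gA _ b a) -(gA _ (b ⊕ a) c) -hab gA (swap (cma m)) IH gA //.
Qed.

Lemma L2 m n : nmul b m ⊕ nmul a n ⊕ nmul c (m * n) = nmul a n ⊕ nmul b m.
Proof.
elim: n => [|n IH]; first by rewrite muln0 /= !g0r g0l.
rewrite [nmul a n.+1]/= mulnS nmulD gA gA (swap (cmc _ _)).
rewrite (swap (esym (cma (m * n)))) IH -!gA (gA (nmul b m)) L1 //.
Qed.

Local Notation phi := (comb3 a b c).
Local Notation A := (zmul a).
Local Notation B := (zmul b).
Local Notation C := (zmul c).

Lemma zA k l : A (k + l) = A k ⊕ A l. Proof. exact: (@zmulD _ _ p_gt0 _ ha). Qed.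
Lemma zB k l : B (k + l) = B k ⊕ B l. Proof. exact: (@zmulD _ _ p_gt0 _ hb). Qed.
Lemma zC k l : C (k + l) = C k ⊕ C l. Proof. exact: (@zmulD _ _ p_gt0 _ hc). Qed.
Lemma zCC k l : C k ⊕ C l = C l ⊕ C k. Proof. exact: (@zmulC _ _ p_gt0 _ hc). Qed.
Lemma cza k n : C k ⊕ A n = A n ⊕ C k.
Proof. apply: zmul_comm; symmetry; exact: zmul_comm. Qed.
Lemma czb k n : C k ⊕ B n = B n ⊕ C k.
Proof. apply: zmul_comm; symmetry; exact: zmul_comm. Qed.

Lemma pz0' : (p%:Z != 0). Proof. by rewrite eqz_nat -lt0n. Qed.
Lemma absmod k : Posz `|(k %% p)%Z|%N = (k %% p)%Z.
Proof. by rewrite gez0_abs // modz_ge0 // pz0'. Qed.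

Lemma comm_ba m n : B m ⊕ A n = A n ⊕ B m ⊕ C (- (m * n)).
Proof.
rewrite (@zmulN _ _ p_gt0 _ hc) (@zmul_nmul _ _ p_gt0 _ hb m) (@zmul_nmul _ _ p_gt0 _ ha n).
rewrite (@zmul_eq _ _ p_gt0 _ hc (m * n) (`|(m %% p)%Z|%N * `|(n %% p)%Z|%N)%N).
  by rewrite -(L2 (`|(m %% p)%Z|%N) (`|(n %% p)%Z|%N)) gKr.
by rewrite PoszM !absmod modzMml modzMmr.
Qed.

Lemma phi_add K1 K2 K3 L1 L2 L3 :
  phi K1 K2 K3 ⊕ phi L1 L2 L3 = phi (K1 + L1) (K2 + L2) (K3 + L3 - K2 * L1).
Proof.
rewrite /comb3 !zA !zB !zC !gA.
rewrite (swap (cza K3 L1)) (swap (czb K3 L2)).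
rewrite -(gA (A K1) (B K2) (A L1)) comm_ba !gA.
by rewrite (swap (czb _ L2)) (swap (zCC _ K3)) (swap (zCC _ L3)).
Qed.

Lemma phi0 : phi 0 0 0 = 0g.
Proof. by rewrite /comb3 /= !g0l. Qed.

Lemma phi_opp K1 K2 K3 : opp (phi K1 K2 K3) = phi (- K1) (- K2) (- K3 - K1 * K2).
Proof.
symmetry; apply: oppU; rewrite phi_add -phi0; congr (comb3 _ _ _ _ _ _); ring.
Qed.

Lemma phi_nmul K1 K2 K3 n :
  nmul (phi K1 K2 K3) n = phi (n%:Z * K1) (n%:Z * K2) (n%:Z * K3 - K1 * K2 * ('C(n, 2))%:Z).
Proof.
elim: n => [|n IH].
  rewrite [nmul _ 0]/= -phi0; have -> : 'C(0, 2) = 0%N by [].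
  congr (comb3 _ _ _ _ _ _); ring.
rewrite [nmul _ n.+1]/= IH phi_add binS bin1 PoszD intS.
congr (comb3 _ _ _ _ _ _); ring.
Qed.

Hypothesis aid : forall x : R, a ⊗ x = x /\ x ⊗ a = x.

Lemma mulc x X1 X2 X3 B1 B2 B3 :
  x = phi X1 X2 X3 -> x ⊗ b = phi B1 B2 B3 -> x ⊗ c = phi 0 0 (X1 * B2 - X2 * B1).
Proof.
move=> hx hxb.
have e1 : x ⊗ (a ⊕ b) = x ⊕ x ⊗ b by rewrite nr_mulDr (aid x).2.
have e2 : x ⊗ (a ⊕ b) = x ⊗ b ⊕ x ⊕ x ⊗ c by rewrite hab !nr_mulDr (aid x).2.
have -> : x ⊗ c = opp (x ⊗ b ⊕ x) ⊕ (x ⊕ x ⊗ b) by rewrite -e1 e2 gKl.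
rewrite hxb hx !phi_add phi_opp phi_add.
congr (comb3 _ _ _ _ _ _); ring.
Qed.

Lemma zmulPos (g : R) (n : nat) : zmul g (Posz n) = nmul g n. Proof. by []. Qed.

Lemma mul_formula x y X1 X2 X3 B1 B2 B3 (y1 y2 y3 : nat) :
  x = phi X1 X2 X3 -> x ⊗ b = phi B1 B2 B3 -> y = phi y1 y2 y3 ->
  x ⊗ y = phi (X1 * y1%:Z + B1 * y2%:Z) (X2 * y1%:Z + B2 * y2%:Z)
     (- (X1 * X2 * ('C(y1, 2))%:Z) - B1 * B2 * ('C(y2, 2))%:Z
      - X2 * B1 * y1%:Z * y2%:Z + X3 * y1%:Z + B3 * y2%:Z
      + X1 * B2 * y3%:Z - X2 * B1 * y3%:Z).
Proof.
move=> hx hxb hy.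
rewrite hy /comb3 !nr_mulDr !mul_zmul !zmulPos.
rewrite (@mulc x X1 X2 X3 B1 B2 B3 hx hxb) hxb (aid x).2 hx !phi_nmul !phi_add.
congr (comb3 _ _ _ _ _ _); ring.
Qed.

Hypothesis huniq : forall x1 x2 x3 y1 y2 y3 : nat,
     (x1 < p)%N -> (x2 < p)%N -> (x3 < p)%N ->
     (y1 < p)%N -> (y2 < p)%N -> (y3 < p)%N ->
     comb3 a b c x1 x2 x3 = comb3 a b c y1 y2 y3 ->
     [/\ x1 = y1, x2 = y2 & x3 = y3].

Lemma abs_lt k : (`|(k %% p)%Z| < p)%N.
Proof. by rewrite -ltz_nat absmod ltz_pmod // ltz_nat. Qed.

Lemma phi_red K1 K2 K3 :
  phi K1 K2 K3 = phi `|(K1 %% p)%Z|%N `|(K2 %% p)%Z|%N `|(K3 %% p)%Z|%N.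
Proof.
rewrite !absmod /comb3.
by rewrite (@zmul_eq _ _ p_gt0 _ ha _ _ (esym (modz_mod K1 p))) (@zmul_eq _ _ p_gt0 _ hb _ _ (esym (modz_mod K2 p)))
  (@zmul_eq _ _ p_gt0 _ hc _ _ (esym (modz_mod K3 p))).
Qed.

Lemma phi_inj K1 K2 K3 L1 L2 L3 : phi K1 K2 K3 = phi L1 L2 L3 ->
  [/\ (K1 = L1 %[mod p])%Z, (K2 = L2 %[mod p])%Z & (K3 = L3 %[mod p])%Z].
Proof.
rewrite (phi_red K1) (phi_red L1).
move=> /(huniq _ _ _ _ _ _ (abs_lt K1) (abs_lt K2) (abs_lt K3) (abs_lt L1) (abs_lt L2) (abs_lt L3)) [e1 e2 e3].
by split; [rewrite -(absmod K1) -(absmod L1) e1 | rewrite -(absmod K2) -(absmod L2) e2 | rewrite -(absmod K3) -(absmod L3) e3].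
Qed.


Variables (alpha beta gamma : R -> nat).
Hypothesis habc : forall x : R, [/\ (alpha x < p)%N, (beta x < p)%N, (gamma x < p)%N &
       nr_mul x b = comb3 a b c (alpha x) (beta x) (gamma x)].
Hypothesis hex : forall x : R, exists x1 x2 x3 : nat,
     [/\ (x1 < p)%N, (x2 < p)%N, (x3 < p)%N & x = comb3 a b c x1 x2 x3].

Lemma part_mul (x y : R) (x1 x2 x3 y1 y2 y3 : nat) :
     x = comb3 a b c x1 x2 x3 -> y = comb3 a b c y1 y2 y3 ->
     let ax : int := alpha x in let bx : int := beta x in
     let gx : int := gamma x in
     let ay : int := alpha y in let by_ : int := beta y in
     let gy : int := gamma y in
     let axy : int := alpha (nr_mul x y) in
     let bxy : int := beta (nr_mul x y) in
     let gxy : int := gamma (nr_mul x y) in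
     [/\ nr_mul x y =
           comb3 a b c
             (x1%:Z * y1%:Z + ax * y2%:Z)
             (x2%:Z * y1%:Z + bx * y2%:Z)
             (- (x1%:Z * x2%:Z * ('C(y1, 2))%:Z) - ax * bx * ('C(y2, 2))%:Z
              - x2%:Z * ax * y1%:Z * y2%:Z + x3%:Z * y1%:Z + gx * y2%:Z
              + x1%:Z * bx * y3%:Z - x2%:Z * ax * y3%:Z),
         (axy = x1%:Z * ay + ax * by_ %[mod p])%Z,
         (bxy = x2%:Z * ay + bx * by_ %[mod p])%Z &
         (gxy = - (x1%:Z * x2%:Z * ('C(alpha y, 2))%:Z)
                - ax * bx * ('C(beta y, 2))%:Z
                - x2%:Z * ax * ay * by_ + x3%:Z * ay + gx * by_
                + x1%:Z * bx * gy - x2%:Z * ax * gy %[mod p])%Z].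
Proof.
move=> hx hy; cbv zeta.
have [_ _ _ hxb] := habc x.
have M := @mul_formula x y x1 x2 x3 (alpha x) (beta x) (gamma x) y1 y2 y3 hx hxb hy.
split; first exact: M.
- have [_ _ _ hyb] := habc y.
  have [_ _ _ hxyb] := habc (x ⊗ y).
  have E : (x ⊗ y) ⊗ b = x ⊗ (y ⊗ b) by rewrite nr_mulA.
  rewrite hxyb hyb (@mul_formula x _ x1 x2 x3 (alpha x) (beta x) (gamma x)
     (alpha y) (beta y) (gamma y) hx hxb erefl) in E.
  by case/phi_inj: E.
- have [_ _ _ hyb] := habc y.
  have [_ _ _ hxyb] := habc (x ⊗ y).
  have E : (x ⊗ y) ⊗ b = x ⊗ (y ⊗ b) by rewrite nr_mulA.
  rewrite hxyb hyb (@mul_formula x _ x1 x2 x3 (alpha x) (beta x) (gamma x)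
     (alpha y) (beta y) (gamma y) hx hxb erefl) in E.
  by case/phi_inj: E.
- have [_ _ _ hyb] := habc y.
  have [_ _ _ hxyb] := habc (x ⊗ y).
  have E : (x ⊗ y) ⊗ b = x ⊗ (y ⊗ b) by rewrite nr_mulA.
  rewrite hxyb hyb (@mul_formula x _ x1 x2 x3 (alpha x) (beta x) (gamma x)
     (alpha y) (beta y) (gamma y) hx hxb erefl) in E.
  by case/phi_inj: E.
Qed.

Lemma part_zs :
  ((alpha 0g = 0%N /\ beta 0g = 0%N /\ gamma 0g = 0%N) <-> zero_symmetric R).
Proof.
split.
- case=> h1 [h2 h3] y.
  have [y1 [y2 [y3 [_ _ _ hy]]]] := hex y.
  have [_ _ _ h0b] := habc 0g.
  rewrite h1 h2 h3 in h0b.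
  have hx0 : 0g = phi (Posz 0%N) (Posz 0%N) (Posz 0%N) by exact: (esym phi0).
  rewrite (@mul_formula 0g y _ _ _ _ _ _ y1 y2 y3 hx0 h0b hy) -phi0.
  congr (comb3 _ _ _ _ _ _); ring.
- move=> zs.
  have [l1 l2 l3 h0b] := habc 0g.
  have E : phi (Posz 0%N) (Posz 0%N) (Posz 0%N) = phi (alpha 0g) (beta 0g) (gamma 0g).
    by rewrite -h0b zs; exact: phi0.
  have [e1 e2 e3] := huniq _ _ _ _ _ _ p_gt0 p_gt0 p_gt0 l1 l2 l3 E.
  by rewrite -e1 -e2 -e3.
Qed.
End ABC.

Theorem lemma5 (p : nat) (R : nearring) (a b c : R)
  (alpha beta gamma : R -> nat) :
  prime p -> odd p ->
  (* additive group G_1 *)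
  nmul a p = nr_zero R -> nmul b p = nr_zero R -> nmul c p = nr_zero R ->
  nr_add a b = nr_add (nr_add b a) c ->
  nr_add a c = nr_add c a ->
  nr_add b c = nr_add c b ->
  (* G_1 = <a> + <b> + <c>: unique normal form a x1 + b x2 + c x3, 0 <= xi < p *)
  (forall x : R, exists x1 x2 x3 : nat,
     [/\ (x1 < p)%N, (x2 < p)%N, (x3 < p)%N & x = comb3 a b c x1 x2 x3]) ->
  (forall x1 x2 x3 y1 y2 y3 : nat,
     (x1 < p)%N -> (x2 < p)%N -> (x3 < p)%N ->
     (y1 < p)%N -> (y2 < p)%N -> (y3 < p)%N ->
     comb3 a b c x1 x2 x3 = comb3 a b c y1 y2 y3 ->
     [/\ x1 = y1, x2 = y2 & x3 = y3]) ->
  (* a is the identity of R *)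
  (forall x : R, nr_mul a x = x /\ nr_mul x a = x) ->
  (* alpha, beta, gamma : R -> Z_p defined by xb = a alpha(x) + b beta(x) + c gamma(x) *)
  (forall x : R, [/\ (alpha x < p)%N, (beta x < p)%N, (gamma x < p)%N &
       nr_mul x b = comb3 a b c (alpha x) (beta x) (gamma x)]) ->
  (forall (x y : R) (x1 x2 x3 y1 y2 y3 : nat),
     (x1 < p)%N -> (x2 < p)%N -> (x3 < p)%N ->
     (y1 < p)%N -> (y2 < p)%N -> (y3 < p)%N ->
     x = comb3 a b c x1 x2 x3 -> y = comb3 a b c y1 y2 y3 ->
     let ax : int := alpha x in let bx : int := beta x in
     let gx : int := gamma x in
     let ay : int := alpha y in let by_ : int := beta y in
     let gy : int := gamma y in
     let axy : int := alpha (nr_mul x y) in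
     let bxy : int := beta (nr_mul x y) in
     let gxy : int := gamma (nr_mul x y) in
     [/\ nr_mul x y =
           comb3 a b c
             (x1%:Z * y1%:Z + ax * y2%:Z)
             (x2%:Z * y1%:Z + bx * y2%:Z)
             (- (x1%:Z * x2%:Z * ('C(y1, 2))%:Z) - ax * bx * ('C(y2, 2))%:Z
              - x2%:Z * ax * y1%:Z * y2%:Z + x3%:Z * y1%:Z + gx * y2%:Z
              + x1%:Z * bx * y3%:Z - x2%:Z * ax * y3%:Z),
         (axy = x1%:Z * ay + ax * by_ %[mod p])%Z,
         (bxy = x2%:Z * ay + bx * by_ %[mod p])%Z &
         (gxy = - (x1%:Z * x2%:Z * ('C(alpha y, 2))%:Z)
                - ax * bx * ('C(beta y, 2))%:Z
                - x2%:Z * ax * ay * by_ + x3%:Z * ay + gx * by_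
                + x1%:Z * bx * gy - x2%:Z * ax * gy %[mod p])%Z]) /\
  ((alpha (nr_zero R) = 0%N /\ beta (nr_zero R) = 0%N /\ gamma (nr_zero R) = 0%N)
     <-> zero_symmetric R).
Proof.
move=> hp _ ha hb hc hab hac hbc hex huniq aid habc.
have p_gt0 : (0 < p)%N := prime_gt0 hp.
split.
- move=> x y x1 x2 x3 y1 y2 y3 _ _ _ _ _ _.
  exact: (@part_mul R p a b c p_gt0 ha hb hc hab hac hbc aid huniq alpha beta gamma habc x y).
- exact: (@part_zs R p a b c p_gt0 ha hb hc hab hac hbc aid huniq alpha beta gamma habc hex).
Qed.
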